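(* Let $V$, $P$, $\overline H_h(P)$ and $\hat H_h^N$ be as in the context. Then for every integer $N\ge0$, $|\overline H_h(P)-\hat H_h^N|=O(h^{N+1})$ as $h\to0$.
   Context: $\mathbb{T}=\mathbb{R}/\mathbb{Z}\cong[-\tfrac12,\tfrac12)$. $V:\mathbb{T}\to\mathbb{R}$ is smooth, symmetric, with a unique non-degenerate minimum at $0$. $\overline H(P)$ is the effective Hamiltonian: the unique constant $c$ for which $\tfrac12(P+\phi')^2+V=c$ has a periodic viscosity solution; $P_{crit}=\inf\{P:\overline H(P)>\min\overline H\}$, and $P>P_{crit}$ is fixed, so that $\overline H(P)>\max V$. For $h>0$, $\overline H_h(P)$ is the unique constant for which $-\tfrac h2v''+\tfrac12(P+v')^2+V=\overline H_h(P)$ has a periodic solution $v=v_h$. Put $p^+(x)=\sqrt{2(\overline H(P)-V(x))}>0$ and $\sigma_0=c/p^+$ with $\int_{\mathbb{T}}\sigma_0=1$. Define $\overline H_0=\overline H(P)$, $v_0(x)=\int_{-1/2}^x p^+(s)ds-P(x+\tfrac12)$, and inductively for $j\ge1$: $\overline H_j=\int_{\mathbb{T}}\big[-\tfrac12 v_{j-1}''+\tfrac12\sum_{i=1}^{j-1}v_i'v_{j-i}'\big]\sigma_0\,dx$, and $v_j$ a smooth periodic solution (unique up to additive constant) of $-\tfrac12v_{j-1}''+p^+v_j'+\tfrac12\sum_{i=1}^{j-1}v_i'v_{j-i}'=\overline H_j$. Set $\hat H_h^N=\sum_{j=0}^N h^j\overline H_j$. *)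

(* Defs.v *)
From Stdlib Require Import Reals Lra List.
From Coquelicot Require Import Coquelicot.
Import ListNotations.
Open Scope R_scope.

(* 1-periodic functions on R = functions on the torus T = R/Z. *)
Definition periodic1 (f : R -> R) : Prop := forall x, f (x + 1) = f x.

Definition smooth (f : R -> R) : Prop := forall (n : nat) (x : R), ex_derive_n f n x.

Definition C1 (f : R -> R) : Prop :=
  (forall x, ex_derive f x) /\ (forall x, continuous (Derive f) x).

Definition twice_diff (f : R -> R) : Prop :=
  forall x, ex_derive f x /\ ex_derive (Derive f) x.

Definition admissible_potential (V : R -> R) : Prop :=
  smooth V /\ periodic1 V /\ (forall x, V (- x) = V x) /\
  (forall x, -1/2 <= x < 1/2 -> x <> 0 -> V 0 < V x) /\
  Derive_n V 2 0 > 0.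

Definition local_max_at (g : R -> R) (x0 : R) : Prop :=
  exists eps, eps > 0 /\ forall y, Rabs (y - x0) < eps -> g y <= g x0.
Definition local_min_at (g : R -> R) (x0 : R) : Prop :=
  exists eps, eps > 0 /\ forall y, Rabs (y - x0) < eps -> g x0 <= g y.

Definition visc_solution (V : R -> R) (P c : R) (phi : R -> R) : Prop :=
  (forall x, continuous phi x) /\
  (forall psi x0, C1 psi -> local_max_at (fun y => phi y - psi y) x0 ->
     1/2 * (P + Derive psi x0) ^ 2 + V x0 <= c) /\
  (forall psi x0, C1 psi -> local_min_at (fun y => phi y - psi y) x0 ->
     1/2 * (P + Derive psi x0) ^ 2 + V x0 >= c).

(* c is the effective Hamiltonian value at P: the equation admits a periodic
   viscosity solution (such c is unique). *)
Definition is_eff_ham (V : R -> R) (P c : R) : Prop :=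
  exists phi, periodic1 phi /\ visc_solution V P c phi.

Definition is_visc_eff_ham (V : R -> R) (P h c : R) : Prop :=
  exists v, periodic1 v /\ twice_diff v /\
    forall x, - h / 2 * Derive_n v 2 x + 1/2 * (P + Derive v x) ^ 2 + V x = c.

Definition min_Hbar (Hbar : R -> R) : Rbar := Glb_Rbar (fun y => exists P', y = Hbar P').

Definition P_crit (Hbar : R -> R) : Rbar :=
  Glb_Rbar (fun P' => 0 <= P' /\ Rbar_lt (min_Hbar Hbar) (Finite (Hbar P'))).

Definition pplus (V : R -> R) (HP : R) (x : R) : R := sqrt (2 * (HP - V x)).

Definition sigma0 (V : R -> R) (HP : R) (x : R) : R :=
  (/ RInt (fun s => / pplus V HP s) (-1/2) (1/2)) / pplus V HP x.

Definition cross_sum (v : nat -> R -> R) (j : nat) (x : R) : R :=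
  fold_right Rplus 0
    (map (fun i => Derive (v i) x * Derive (v (j - i)%nat) x) (seq 1 (j - 1))).

Definition expansion_data (V : R -> R) (P HP : R)
    (Hj : nat -> R) (v : nat -> R -> R) : Prop :=
  Hj 0%nat = HP /\
  (forall x, v 0%nat x = RInt (pplus V HP) (-1/2) x - P * (x + 1/2)) /\
  forall j : nat, (1 <= j)%nat ->
    Hj j = RInt (fun x => (- 1/2 * Derive_n (v (j - 1)%nat) 2 x
                           + 1/2 * cross_sum v j x) * sigma0 V HP x) (-1/2) (1/2) /\
    smooth (v j) /\ periodic1 (v j) /\
    forall x, - 1/2 * Derive_n (v (j - 1)%nat) 2 x + pplus V HP x * Derive (v j) x
              + 1/2 * cross_sum v j x = Hj j.

Definition Hhat (Hj : nat -> R) (h : R) (N : nat) : R :=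
  sum_f_R0 (fun j => h ^ j * Hj j) N.

(* Main.v *)
Require Import Defs.
From Stdlib Require Import Reals.
From Coquelicot Require Import Coquelicot.
From Stdlib Require Import Lra Lia List Classical ZArith.
Require Import Defs.
Open Scope R_scope.

Lemma cont_eps (f : R -> R) x : continuous f x ->
  forall eps, 0 < eps -> exists d, 0 < d /\ forall y, Rabs (y - x) < d -> Rabs (f y - f x) < eps.
Proof.
  intros Hc eps He.
  destruct (Hc (ball (f x) eps) (locally_ball (f x) (mkposreal eps He))) as [d Hd].
  exists d. split. apply cond_pos. intros y Hy. apply Hd. exact Hy.
Qed.

Lemma cont_pt (f : R -> R) x : continuous f x -> continuity_pt f x.
Proof. intros H; apply continuity_pt_filterlim; exact H. Qed.

Lemma per_nat f n x : periodic1 f -> f (x + INR n) = f x.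
Proof.
  intros Hp; induction n. simpl. rewrite Rplus_0_r; auto.
  rewrite S_INR. replace (x + (INR n + 1)) with ((x + INR n) + 1) by ring.
  rewrite Hp; auto.
Qed.

Lemma per_Z f (z : Z) x : periodic1 f -> f (x + IZR z) = f x.
Proof.
  intros Hp. destruct (Z_le_gt_dec 0 z) as [Hz|Hz].
  - rewrite <- (Z2Nat.id z Hz), <- INR_IZR_INZ. apply per_nat; auto.
  - assert (0 <= - z)%Z by lia.
    replace z with (- Z.of_nat (Z.to_nat (- z)))%Z by lia.
    rewrite opp_IZR, <- INR_IZR_INZ.
    rewrite <- (per_nat f (Z.to_nat (-z)) (x + - INR (Z.to_nat (- z))) Hp).
    f_equal; ring.
Qed.

Lemma per_reduce f : periodic1 f -> forall x, exists y, 0 <= y <= 1 /\ f x = f y.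
Proof.
  intros Hp x. destruct (archimed x) as [H1 H2].
  exists (x - IZR (up x) + 1). split. lra.
  replace (x - IZR (up x) + 1) with (x + IZR (1 - up x)).
  rewrite per_Z; auto. rewrite minus_IZR. ring.
Qed.

Lemma per_min f : periodic1 f -> (forall x, continuous f x) -> exists m, forall x, f m <= f x.
Proof.
  intros Hp Hc. destruct (continuity_ab_min f 0 1) as [m [Hm _]]. lra.
  intros; apply cont_pt; auto.
  exists m. intros x. destruct (per_reduce f Hp x) as [y [Hy ->]]. auto.
Qed.

Lemma per_max f : periodic1 f -> (forall x, continuous f x) -> exists m, forall x, f x <= f m.
Proof.
  intros Hp Hc. destruct (continuity_ab_maj f 0 1) as [m [Hm _]]. lra.
  intros; apply cont_pt; auto.
  exists m. intros x. destruct (per_reduce f Hp x) as [y [Hy ->]]. auto.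
Qed.

Lemma per_bound f : periodic1 f -> (forall x, continuous f x) -> exists B, 0 <= B /\ forall x, Rabs (f x) <= B.
Proof.
  intros Hp Hc. destruct (per_min f Hp Hc) as [m Hm]. destruct (per_max f Hp Hc) as [M HM].
  exists (Rmax (Rabs (f m)) (Rabs (f M))). split.
  apply (Rle_trans _ _ _ (Rabs_pos (f m))), Rmax_l.
  intros x. specialize (Hm x); specialize (HM x).
  unfold Rabs at 1; destruct (Rcase_abs (f x)).
  eapply Rle_trans; [|apply Rmax_l]. unfold Rabs; destruct (Rcase_abs (f m)); lra.
  eapply Rle_trans; [|apply Rmax_r]. unfold Rabs; destruct (Rcase_abs (f M)); lra.
Qed.

Lemma deriv_min0 f x l : is_derive f x l -> (forall y, f x <= f y) -> l = 0.
Proof.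
  intros Hd Hm. apply is_derive_Reals in Hd.
  pose (pr := exist _ l Hd : derivable_pt f x).
  rewrite <- (derive_pt_eq_0 f x l pr Hd).
  apply (deriv_minimum f (x-1) (x+1)); try lra. intros; auto.
Qed.

Lemma deriv_max0 f x l : is_derive f x l -> (forall y, f y <= f x) -> l = 0.
Proof.
  intros Hd Hm. apply is_derive_Reals in Hd.
  pose (pr := exist _ l Hd : derivable_pt f x).
  rewrite <- (derive_pt_eq_0 f x l pr Hd).
  apply (deriv_maximum f (x-1) (x+1)); try lra. intros; auto.
Qed.

Lemma per_Derive f : periodic1 f -> periodic1 (Derive f).
Proof.
  intros Hp x. unfold Derive. f_equal. apply Lim_ext. intros y.
  replace (x + 1 + y) with ((x + y) + 1) by ring. rewrite !Hp. auto.
Qed.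

Lemma cross (g : R -> R) a b : (forall x, continuous g x) -> a < b -> g a < 0 -> 0 < g b ->
  exists s, g s = 0 /\ forall l, is_derive g s l -> 0 <= l.
Proof.
  intros Hc Hab Ha Hb.
  set (E := fun t => a <= t <= b /\ forall u, a <= u <= t -> g u < 0).
  destruct (completeness E) as [s [Hub Hl]].
  { exists b. intros t [Ht _]. lra. }
  { exists a. split. lra. intros u Hu. replace u with a by lra. auto. }
  assert (Has : a <= s). { apply Hub. split. lra. intros u Hu. replace u with a by lra. auto. }
  assert (Hsb : s <= b). { apply Hl. intros t [Ht _]; lra. }
  assert (F1 : forall u, a <= u < s -> g u < 0).
  { intros u Hu. destruct (classic (exists t, E t /\ u < t)) as [[t [[Ht Hg] Hut]]|Hn].
    apply Hg; lra.
    exfalso. assert (s <= u). apply Hl. intros t Et. apply Rnot_lt_le. intros Hlt. apply Hn. eauto. lra. }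
  assert (Hs0 : g s = 0).
  { destruct (Rtotal_order (g s) 0) as [Hneg|[Heq|Hpos]]; auto; exfalso.
    - destruct (cont_eps g s (Hc s) (- g s)) as [d [Hd Hdd]]. lra.
      assert (Hsb' : s < b). { destruct (Req_dec s b); [subst; lra| lra]. }
      set (t' := Rmin (s + d/2) b).
      assert (Et : E t').
      { split. unfold t'. split. apply Rmin_glb; lra. apply Rmin_r.
        intros u Hu. destruct (Rlt_dec u s). apply F1; lra.
        assert (Hd2 : Rabs (u - s) < d). { assert (u <= s + d/2) by (eapply Rle_trans; [apply Hu| apply Rmin_l]).
          rewrite Rabs_right; lra. }
        specialize (Hdd u Hd2). rewrite Rabs_lt_between in Hdd. lra. }
      specialize (Hub t' Et). unfold t' in Hub. unfold Rmin in Hub. destruct (Rle_dec (s + d/2) b); lra.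
    - destruct (cont_eps g s (Hc s) (g s)) as [d [Hd Hdd]]. lra.
      assert (Has' : a < s). { destruct (Req_dec a s); [subst; lra| lra]. }
      set (u := Rmax a (s - d/2)).
      assert (Hgu : g u < 0). { apply F1. unfold u. split. apply Rmax_l. apply Rmax_lub_lt; lra. }
      assert (Hd2 : Rabs (u - s) < d). { unfold u, Rmax. destruct (Rle_dec a (s - d/2)); rewrite Rabs_left; lra. }
      specialize (Hdd u Hd2). rewrite Rabs_lt_between in Hdd. lra. }
  exists s. split. auto.
  assert (a < s). { destruct (Req_dec a s); [subst; lra| lra]. }
  intros l Hd. apply Rnot_lt_le. intros Hl0.
  apply is_derive_Reals in Hd. destruct (Hd (- l / 2)) as [del Hdel]. lra.
  set (h := - Rmin (del/2) ((s - a)/2)).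
  assert (Hm1 : 0 < Rmin (del/2) ((s - a)/2)). { apply Rmin_glb_lt. destruct del; simpl; lra. lra. }
  assert (Hm2 : Rmin (del/2) ((s - a)/2) <= del/2) by apply Rmin_l.
  assert (Hm3 : Rmin (del/2) ((s - a)/2) <= (s-a)/2) by apply Rmin_r.
  assert (Hh : h <> 0) by (unfold h; lra).
  assert (Hh2 : Rabs h < del). { unfold h. rewrite Rabs_left; destruct del; simpl in *; lra. }
  specialize (Hdel h Hh Hh2). rewrite Hs0 in Hdel.
  assert (Hg : g (s + h) < 0). { apply F1. unfold h; lra. }
  assert (Hq : 0 < (g (s + h) - 0) / h).
  { unfold Rdiv. assert (Hi : / h < 0) by (apply Rinv_lt_0_compat; unfold h; lra). nra. }
  rewrite Rabs_lt_between in Hdel. lra.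
Qed.

Lemma cplus (f g : R -> R) x : continuous f x -> continuous g x -> continuous (fun y => f y + g y) x.
Proof. intros; exact (continuous_plus f g x H H0). Qed.
Lemma cminus (f g : R -> R) x : continuous f x -> continuous g x -> continuous (fun y => f y - g y) x.
Proof. intros; exact (continuous_minus f g x H H0). Qed.
Lemma cmult (f g : R -> R) x : continuous f x -> continuous g x -> continuous (fun y => f y * g y) x.
Proof. intros; exact (continuous_mult f g x H H0). Qed.
Lemma cconst (c : R) x : continuous (fun _ : R => c) x.
Proof. apply continuous_const. Qed.
Lemma cid x : continuous (fun y : R => y) x.
Proof. apply continuous_id. Qed.

Lemma dplus (f g : R -> R) x a b : is_derive f x a -> is_derive g x b -> is_derive (fun y => f y + g y) x (a + b).
Proof. intros; exact (is_derive_plus f g x a b H H0). Qed.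
Lemma dminus (f g : R -> R) x a b : is_derive f x a -> is_derive g x b -> is_derive (fun y => f y - g y) x (a - b).
Proof. intros; exact (is_derive_minus f g x a b H H0). Qed.
Lemma dconst (c : R) x : is_derive (fun _ : R => c) x 0.
Proof. exact (@is_derive_const R_AbsRing R_NormedModule c x). Qed.

Lemma ex_RInt_c (f : R -> R) a b : (forall x, continuous f x) -> ex_RInt f a b.
Proof. intros H; apply (@ex_RInt_continuous R_CompleteNormedModule); intros; auto. Qed.

Lemma Q_deriv (r : R -> R) x : (forall y, continuous r y) ->
  is_derive (fun t => RInt r (-1/2) t) x (r x).
Proof.
  intros Hc. apply (is_derive_RInt r _ (-1/2)). 2: auto.
  exists (mkposreal 1 Rlt_0_1). intros y _. apply (@RInt_correct R_CompleteNormedModule), ex_RInt_c; auto.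
Qed.

Lemma Q_shift (r : R -> R) t : (forall y, continuous r y) -> periodic1 r ->
  RInt r (-1/2) (t+1) = RInt r (-1/2) t + RInt r (-1/2) (1/2).
Proof.
  intros Hc Hp.
  rewrite <- (RInt_Chasles r (-1/2) (1/2) (t+1)) by (apply ex_RInt_c; auto).
  change (plus ?a ?b) with (a + b).
  assert (E: RInt r (1/2) (t+1) = RInt r (-1/2) t).
  { replace (1/2) with (1 * (-1/2) + 1) by field. replace (t + 1) with (1 * t + 1) by ring.
    rewrite <- RInt_comp_lin by (apply ex_RInt_c; auto).
    apply RInt_ext. intros x _. change (scal 1 ?y) with (1 * y). rewrite Rmult_1_l.
    rewrite Rmult_1_l. apply Hp. }
  rewrite E. apply Rplus_comm.
Qed.

Lemma RInt_per_deriv (f : R -> R) : periodic1 f -> (forall x, ex_derive f x) ->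
  (forall x, continuous (Derive f) x) -> RInt (Derive f) (-1/2) (1/2) = 0.
Proof.
  intros Hp Hd Hc. rewrite RInt_Derive by auto.
  replace (1/2) with (-1/2 + 1) by field. rewrite Hp. apply Rminus_diag.
Qed.

Lemma C1_of (psi dpsi : R -> R) : (forall x, is_derive psi x (dpsi x)) -> (forall x, continuous dpsi x) ->
  C1 psi /\ forall x, Derive psi x = dpsi x.
Proof.
  intros Hd Hc. assert (E : forall x, Derive psi x = dpsi x) by (intros; apply is_derive_unique; auto).
  split; [split|]; auto.
  intros x; eexists; eauto.
  intros x. apply (continuous_ext dpsi). intros; rewrite E; auto. auto.
Qed.

Lemma visc_ge_V V P c phi : (forall x, continuous V x) -> periodic1 phi -> visc_solution V P c phi ->
  forall x0, V x0 <= c.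
Proof.
  intros HV Hp [Hcp [Hsub _]] x0. apply Rnot_lt_le. intros Hlt.
  destruct (cont_eps V x0 (HV x0) (V x0 - c)) as [d [Hd Hdd]]. lra.
  destruct (per_bound phi Hp Hcp) as [B [HB0 HB]].
  set (r := Rmin (d/2) (1/2)).
  assert (Hr : 0 < r) by (apply Rmin_glb_lt; lra).
  assert (Hr2 : r <= d/2) by apply Rmin_l.
  set (K := (2*B + 1) / (r*r)).
  assert (HK : K * (r * r) = 2 * B + 1) by (unfold K; field; lra).
  assert (HK0 : 0 < K) by (unfold K; apply Rdiv_lt_0_compat; nra).
  set (psi := fun t => K * ((t - x0) * (t - x0))).
  set (f := fun t => phi t - psi t).
  destruct (continuity_ab_maj f (x0 - r) (x0 + r)) as [Mx [HM HMw]]. lra.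
  { intros y _. apply cont_pt. unfold f, psi. apply cminus. auto.
    apply cmult. apply cconst. apply cmult; apply cminus; (apply cid || apply cconst). }
  assert (Hx0 : f x0 <= f Mx) by (apply HM; lra).
  unfold f, psi in Hx0. replace (x0 - x0) with 0 in Hx0 by ring.
  assert (Hp1 := HB Mx). assert (Hp2 := HB x0). rewrite Rabs_le_between in Hp1, Hp2.
  assert (Hsq : (Mx - x0) * (Mx - x0) < r * r).
  { apply Rnot_le_lt; intros Hge. assert (K * (r * r) <= K * ((Mx - x0) * (Mx - x0))).
    apply Rmult_le_compat_l; lra. lra. }
  assert (Habs : Rabs (Mx - x0) < r).
  { apply Rnot_le_lt; intros Hge. assert (r * r <= Rabs (Mx - x0) * Rabs (Mx - x0)) by nra.
    assert (Rabs (Mx-x0) * Rabs (Mx-x0) = (Mx-x0)*(Mx-x0)) by (rewrite <- Rabs_mult; apply Rabs_right; apply Rle_ge; apply Rle_0_sqr). lra. }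
  destruct (C1_of psi (fun t => K * (2 * (t - x0)))) as [HC1 HD].
  { intros x. unfold psi. auto_derive. auto. ring. }
  { intros x. apply cmult. apply cconst. apply cmult. apply cconst. apply cminus. apply cid. apply cconst. }
  assert (Hloc : local_max_at (fun y => phi y - psi y) Mx).
  { exists (r - Rabs (Mx - x0)). split. lra. intros y Hy. apply HM.
    rewrite Rabs_lt_between in Hy. pose proof (Rle_abs (Mx - x0)) as A1. pose proof (Rle_abs (-(Mx - x0))) as A2.
    rewrite Rabs_Ropp in A2. lra. }
  specialize (Hsub psi Mx HC1 Hloc).
  assert (V Mx > c). { assert (Hy : Rabs (Mx - x0) < d) by lra.
    specialize (Hdd Mx Hy). rewrite Rabs_lt_between in Hdd. lra. }
  assert (0 <= 1/2 * (P + Derive psi Mx) ^ 2) by (apply Rmult_le_pos; [lra| apply pow2_ge_0]).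
  lra.
Qed.

Lemma did x : is_derive (fun y : R => y) x 1.
Proof. exact (@is_derive_id R_AbsRing x). Qed.

Lemma Q_cont (r : R -> R) x : (forall y, continuous r y) -> continuous (fun t => RInt r (-1/2) t) x.
Proof. intros H. apply (ex_derive_continuous (fun t => RInt r (-1/2) t)). eexists. apply Q_deriv; auto. Qed.

Lemma mtrick V P c phi r : periodic1 phi -> visc_solution V P c phi ->
  (forall x, continuous r x) -> periodic1 r -> RInt r (-1/2) (1/2) <> 0 ->
  (exists t, 1/2 * (P / RInt r (-1/2) (1/2) * r t)^2 + V t <= c) /\
  (exists t, 1/2 * (P / RInt r (-1/2) (1/2) * r t)^2 + V t >= c).
Proof.
  intros Hp Hv Hc Hpr HI.
  set (I := RInt r (-1/2) (1/2)) in *. set (a := P / I).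
  assert (HaI : a * I = P) by (unfold a; field; auto).
  set (m := fun t => phi t + P * t - a * RInt r (-1/2) t).
  assert (Hmp : periodic1 m).
  { intros t. unfold m. rewrite Q_shift by auto. rewrite Hp. fold I. rewrite <- HaI. ring. }
  destruct Hv as [Hcp [Hsub Hsup]].
  assert (Hmc : forall x, continuous m x).
  { intros x. unfold m. apply cminus. apply cplus. auto. apply cmult. apply cconst. apply cid.
    apply cmult. apply cconst. apply Q_cont; auto. }
  set (psi := fun t => a * RInt r (-1/2) t - P * t).
  destruct (C1_of psi (fun t => a * r t - P)) as [HC1 HD].
  { intros x. unfold psi. apply dminus. apply is_derive_scal. apply Q_deriv; auto.
    replace P with (P * 1) at 2 by ring. apply is_derive_scal. apply did. }
  { intros x. apply cminus. apply cmult. apply cconst. auto. apply cconst. }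
  assert (Em : forall y, phi y - psi y = m y) by (intros; unfold psi, m; ring).
  split.
  - destruct (per_max m Hmp Hmc) as [t0 Ht0]. exists t0.
    assert (Hl : local_max_at (fun y => phi y - psi y) t0).
    { exists 1. split. lra. intros y _. rewrite !Em. auto. }
    specialize (Hsub psi t0 HC1 Hl). rewrite HD in Hsub.
    replace (P + (a * r t0 - P)) with (a * r t0) in Hsub by ring. exact Hsub.
  - destruct (per_min m Hmp Hmc) as [t0 Ht0]. exists t0.
    assert (Hl : local_min_at (fun y => phi y - psi y) t0).
    { exists 1. split. lra. intros y _. rewrite !Em. auto. }
    specialize (Hsup psi t0 HC1 Hl). rewrite HD in Hsup.
    replace (P + (a * r t0 - P)) with (a * r t0) in Hsup by ring. exact Hsup.
Qed.

Lemma sqrt_cont (g : R -> R) x : (forall y, 0 <= g y) -> continuous g x -> continuous (fun y => sqrt (g y)) x.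
Proof.
  intros H0 Hg. apply (continuous_comp g sqrt). auto.
  apply continuity_pt_filterlim. apply continuity_pt_sqrt. auto.
Qed.

Lemma RInt_const_R (k : R) : RInt (fun _ => k) (-1/2) (1/2) = k.
Proof. rewrite RInt_const. change (scal ?a ?b) with (a * b). replace (1/2 - -1/2) with 1 by field. apply Rmult_1_l. Qed.

Lemma RInt_plus_R (f g : R -> R) : (forall x, continuous f x) -> (forall x, continuous g x) ->
  RInt (fun x => f x + g x) (-1/2) (1/2) = RInt f (-1/2) (1/2) + RInt g (-1/2) (1/2).
Proof. intros. exact (RInt_plus f g _ _ (ex_RInt_c f _ _ H) (ex_RInt_c g _ _ H0)). Qed.

Lemma RInt_pos_R (f : R -> R) : (forall x, continuous f x) -> (forall x, 0 <= f x) -> 0 <= RInt f (-1/2) (1/2).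
Proof.
  intros Hc Hp. rewrite <- (RInt_const_R 0). apply RInt_le. lra.
  apply ex_RInt_c; intros; apply cconst. apply ex_RInt_c; auto. intros; auto.
Qed.

Lemma RInt_spos_R (f : R -> R) : (forall x, continuous f x) -> (forall x, 0 < f x) -> 0 < RInt f (-1/2) (1/2).
Proof.
  intros Hc Hp. rewrite <- (RInt_const_R 0). apply RInt_lt. lra.
  intros; auto. intros; apply cconst. intros; auto.
Qed.

Definition qf (V : R -> R) (c : R) := fun x => sqrt (2 * (c - V x)).

Lemma qf_cont V c x : (forall y, continuous V y) -> (forall y, V y <= c) -> continuous (qf V c) x.
Proof.
  intros HV Hle. unfold qf. apply sqrt_cont. intros y; specialize (Hle y); lra.
  apply cmult. apply cconst. apply cminus. apply cconst. auto.
Qed.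

Lemma qf_per V c : periodic1 V -> periodic1 (qf V c).
Proof. intros H x; unfold qf; rewrite H; auto. Qed.

Lemma qf_sq V c x : V x <= c -> qf V c x * qf V c x = 2 * (c - V x).
Proof. intros; unfold qf; apply sqrt_sqrt; lra. Qed.

Lemma visc_upper V P c phi : (forall x, continuous V x) -> periodic1 V -> periodic1 phi ->
  visc_solution V P c phi -> Rabs P <= RInt (qf V c) (-1/2) (1/2).
Proof.
  intros HV HVp Hp Hv.
  assert (Hle := visc_ge_V V P c phi HV Hp Hv).
  assert (Hqc : forall x, continuous (qf V c) x) by (intros; apply qf_cont; auto).
  assert (Hq0 : forall x, 0 <= qf V c x) by (intros; apply sqrt_pos).
  set (Iq := RInt (qf V c) (-1/2) (1/2)).
  assert (HIq : 0 <= Iq) by (apply RInt_pos_R; auto).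
  apply Rnot_lt_le. intros Hlt.
  set (eps := (Rabs P - Iq) / 2).
  assert (He : 0 < eps) by (unfold eps; lra).
  set (r := fun x => qf V c x + eps).
  assert (Hrc : forall x, continuous r x) by (intros; apply cplus; auto; apply cconst).
  assert (HIr : RInt r (-1/2) (1/2) = Iq + eps).
  { unfold r. rewrite RInt_plus_R; auto. rewrite RInt_const_R. auto. intros; apply cconst. }
  assert (Hrp : periodic1 r) by (intros x; unfold r; rewrite qf_per; auto).
  destruct (mtrick V P c phi r Hp Hv Hrc Hrp) as [[t Ht] _]. rewrite HIr; lra.
  rewrite HIr in Ht. set (a := P / (Iq + eps)) in Ht.
  assert (HaI : a * (Iq + eps) = P) by (unfold a; field; lra).
  assert (Ha : 1 < a * a).
  { assert (Rabs a * (Iq + eps) = Rabs P) by (rewrite <- HaI, Rabs_mult, (Rabs_right (Iq + eps)); lra).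
    assert (Hlt3 : Iq + eps < Rabs P) by (unfold eps; lra).
    assert (Ha1 : 1 < Rabs a).
    { apply Rnot_le_lt; intros Hn. assert (Rabs a * (Iq + eps) <= 1 * (Iq + eps)).
      apply Rmult_le_compat_r; lra. lra. }
    assert (Rabs a * Rabs a = Rabs (a * a)) by (symmetry; apply Rabs_mult).
    assert (Rabs (a*a) = a * a) by (apply Rabs_right; apply Rle_ge; apply Rle_0_sqr).
    nra. }
  assert (Hsq := qf_sq V c t (Hle t)).
  assert (Hq := Hq0 t). unfold r in Ht.
  assert (Hr : 0 < qf V c t + eps) by lra.
  set (s := qf V c t + eps) in *. set (q := qf V c t) in *.
  assert (H1 : q * q < s * s) by (unfold s; nra).
  assert (H2 : 0 < (a * a - 1) * (s * s)) by (apply Rmult_lt_0_compat; nra).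
  replace ((a * s) ^ 2) with ((a*a) * (s*s)) in Ht by ring.
  nra.
Qed.

Lemma visc_lower V P c phi : (forall x, continuous V x) -> periodic1 V -> periodic1 phi ->
  visc_solution V P c phi -> (forall x, V x < c) -> RInt (qf V c) (-1/2) (1/2) <= Rabs P.
Proof.
  intros HV HVp Hp Hv Hlt.
  assert (Hle : forall x, V x <= c) by (intros x; specialize (Hlt x); lra).
  assert (Hqc : forall x, continuous (qf V c) x) by (intros; apply qf_cont; auto).
  assert (Hq0 : forall x, 0 < qf V c x) by (intros x; apply sqrt_lt_R0; specialize (Hlt x); lra).
  set (Iq := RInt (qf V c) (-1/2) (1/2)).
  assert (HIq : 0 < Iq) by (apply RInt_spos_R; auto).
  apply Rnot_lt_le. intros Hlt2.
  destruct (mtrick V P c phi (qf V c) Hp Hv Hqc (qf_per V c HVp)) as [_ [t Ht]]. fold Iq; lra.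
  fold Iq in Ht. set (a := P / Iq) in Ht.
  assert (HaI : a * Iq = P) by (unfold a; field; lra).
  assert (Ha : a * a < 1).
  { assert (Rabs a * Iq = Rabs P) by (rewrite <- HaI, Rabs_mult, (Rabs_right Iq); lra).
    assert (Ha1 : Rabs a < 1).
    { apply Rnot_le_lt; intros Hn. assert (1 * Iq <= Rabs a * Iq).
      apply Rmult_le_compat_r; lra. lra. }
    assert (Rabs a * Rabs a = Rabs (a * a)) by (symmetry; apply Rabs_mult).
    assert (Rabs (a*a) = a * a) by (apply Rabs_right; apply Rle_ge; apply Rle_0_sqr).
    pose proof (Rabs_pos a). nra. }
  assert (Hsq := qf_sq V c t (Hle t)).
  assert (Hq := Hq0 t).
  set (q := qf V c t) in *.
  assert (H2 : 0 < (1 - a * a) * (q * q)) by (apply Rmult_lt_0_compat; nra).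
  replace ((a * q) ^ 2) with ((a*a) * (q*q)) in Ht by ring.
  nra.
Qed.

Lemma glb_lt (S : R -> Prop) (x : R) : Rbar_lt (Glb_Rbar S) (Finite x) -> exists y, S y /\ y < x.
Proof.
  intros H. apply NNPP. intros Hn.
  destruct (Glb_Rbar_correct S) as [_ Hg].
  assert (Rbar_le (Finite x) (Glb_Rbar S)).
  { apply Hg. intros y Sy. simpl. apply Rnot_lt_le. intros Hlt. apply Hn. eauto. }
  destruct (Glb_Rbar S); simpl in *; lra.
Qed.

Lemma smooth_cont f : smooth f -> forall x, continuous f x.
Proof. intros H x. apply (@ex_derive_continuous R_AbsRing R_NormedModule). exact (H 1%nat x). Qed.

Lemma Hbar_facts V Hbar P : admissible_potential V -> (forall P', is_eff_ham V P' (Hbar P')) ->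
  Rbar_lt (P_crit Hbar) (Finite P) ->
  0 < P /\ (forall x, V x < Hbar P) /\ RInt (qf V (Hbar P)) (-1/2) (1/2) = P.
Proof.
  intros [Hsm [Hper _]] Heff Hcrit.
  assert (HV := smooth_cont V Hsm).
  destruct (glb_lt _ _ Hcrit) as [P1 [[HP1 Hmin] HP1P]].
  unfold min_Hbar in Hmin.
  destruct (glb_lt _ _ Hmin) as [y2 [[P2 ->] H21]].
  destruct (Heff P2) as [phi2 [Hp2 Hv2]].
  assert (HV2 := visc_ge_V V P2 (Hbar P2) phi2 HV Hp2 Hv2).
  assert (HV1 : forall x, V x < Hbar P1) by (intros x; specialize (HV2 x); lra).
  destruct (Heff P1) as [phi1 [Hp1 Hv1]].
  assert (L1 := visc_lower V P1 (Hbar P1) phi1 HV Hper Hp1 Hv1 HV1).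
  rewrite Rabs_right in L1 by lra.
  destruct (Heff P) as [phi [Hp Hv]].
  assert (HV0 := visc_ge_V V P (Hbar P) phi HV Hp Hv).
  assert (U := visc_upper V P (Hbar P) phi HV Hper Hp Hv).
  rewrite Rabs_right in U by lra.
  assert (Hc : Hbar P1 < Hbar P).
  { apply Rnot_le_lt. intros Hle.
    assert (RInt (qf V (Hbar P)) (-1/2) (1/2) <= RInt (qf V (Hbar P1)) (-1/2) (1/2)).
    { apply RInt_le. lra. apply ex_RInt_c; intros; apply qf_cont; auto.
      apply ex_RInt_c; intros; apply qf_cont; auto. intros x0; specialize (HV1 x0); lra.
      intros x _. unfold qf. apply sqrt_le_1_alt. lra. }
    lra. }
  assert (HVl : forall x, V x < Hbar P) by (intros x; specialize (HV1 x); lra).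
  assert (L := visc_lower V P (Hbar P) phi HV Hper Hp Hv HVl).
  rewrite Rabs_right in L by lra.
  repeat split; try lra; auto.
Qed.

Fixpoint ssum (f : nat -> R) (n : nat) : R := match n with O => 0 | S n => ssum f n + f n end.

Lemma ssum_ext f g n : (forall k, (k < n)%nat -> f k = g k) -> ssum f n = ssum g n.
Proof. induction n; intros H; simpl; auto. rewrite IHn by (intros; apply H; lia). rewrite H by lia. auto. Qed.

Lemma ssum_shift f n : ssum f (S n) = f 0%nat + ssum (fun k => f (S k)) n.
Proof. induction n. simpl; ring. change (ssum f (S (S n))) with (ssum f (S n) + f (S n)). rewrite IHn. simpl. ring. Qed.

Lemma ssum_plus f g n : ssum (fun k => f k + g k) n = ssum f n + ssum g n.
Proof. induction n; simpl; [ring| rewrite IHn; ring]. Qed.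

Lemma ssum_minus f g n : ssum (fun k => f k - g k) n = ssum f n - ssum g n.
Proof. induction n; simpl; [ring| rewrite IHn; ring]. Qed.

Lemma ssum_scal c f n : ssum (fun k => c * f k) n = c * ssum f n.
Proof. induction n; simpl; [ring| rewrite IHn; ring]. Qed.

Lemma sum_f_R0_ssum f N : sum_f_R0 f N = ssum f (S N).
Proof. induction N; simpl; [ring| rewrite IHN; simpl; ring]. Qed.

Lemma fold_ssum (f : nat -> R) s n : fold_right Rplus 0 (map f (seq s n)) = ssum (fun k => f (s + k)%nat) n.
Proof.
  revert s; induction n; intros s. simpl; auto.
  rewrite ssum_shift. simpl. rewrite IHn. rewrite Nat.add_0_r. f_equal.
  apply ssum_ext. intros; f_equal; lia.
Qed.

Lemma ssum_bound f n c : (forall k, (k < n)%nat -> Rabs (f k) <= c) -> Rabs (ssum f n) <= INR n * c.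
Proof.
  induction n; intros H. simpl. rewrite Rabs_R0; lra.
  simpl ssum. rewrite S_INR. eapply Rle_trans. apply Rabs_triang.
  assert (Rabs (ssum f n) <= INR n * c) by (apply IHn; intros; apply H; lia).
  assert (Rabs (f n) <= c) by (apply H; lia). lra.
Qed.

Lemma ssum_S f n : ssum f (S n) = ssum f n + f n. Proof. reflexivity. Qed.

Lemma pow_le1 x n : 0 <= x <= 1 -> x ^ n <= 1.
Proof. intros H; induction n; simpl. lra. assert (0 <= x ^ n) by (apply pow_le; lra). nra. Qed.

Section Resid.
Variables (a b H : nat -> R) (V0 h : R).
Definition Ws n := ssum (fun j => h ^ j * a j) n.

Lemma Ws1 : Ws 1 = a 0%nat. Proof. unfold Ws; simpl; ring. Qed.

Lemma resid_id N :
  1/2 * (a 0%nat * a 0%nat) + V0 = H 0%nat ->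
  (forall j, (1 <= j <= N)%nat -> -1/2 * b (j-1)%nat + a 0%nat * a j + 1/2 * ssum (fun k => a (S k) * a (j - S k)%nat) (j - 1) = H j) ->
  - h / 2 * ssum (fun j => h ^ j * b j) (S N) + 1/2 * (Ws (S N) * Ws (S N)) + V0 - ssum (fun j => h ^ j * H j) (S N)
  = - (h ^ (S N) * b N) / 2 + 1/2 * ssum (fun k => h ^ (S k) * a (S k) * (Ws (S N) - Ws (N - k))) N.
Proof.
  intros H0 HJ. induction N.
  - simpl. unfold Ws; simpl. rewrite <- H0. field.
  - assert (IH := IHN (fun j Hj => HJ j ltac:(lia))). clear IHN.
    assert (HJN := HJ (S N) ltac:(lia)).
    replace (S N - 1)%nat with N in HJN by lia.
    set (T := ssum (fun k => h ^ (S k) * a (S k)) N) in *.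
    set (X := ssum (fun k => a (S k) * a (S N - S k)%nat) N) in *.
    set (Fold := ssum (fun k => h ^ (S k) * a (S k) * (Ws (S N) - Ws (N - k))) N) in *.
    assert (E3 : Ws (S N) = a 0%nat + T) by (unfold Ws, T; rewrite ssum_shift; simpl; ring).
    assert (E1 : ssum (fun k => h ^ (S k) * a (S k) * (Ws (S (S N)) - Ws (S N - k))) (S N)
       = Fold + h ^ (S N) * a (S N) * T - h ^ (S N) * X + h ^ (S N) * a (S N) * (Ws (S (S N)) - a 0%nat)).
    { rewrite ssum_S. cbv beta. replace (S N - N)%nat with 1%nat by lia. rewrite Ws1.
      f_equal.
      unfold Fold, T, X. rewrite <- ssum_scal, <- ssum_scal, <- ssum_plus, <- ssum_minus.
      apply ssum_ext. intros k Hk.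
      replace (S N - k)%nat with (S (N - k)) by lia.
      change (Ws (S (S N))) with (Ws (S N) + h ^ (S N) * a (S N)).
      change (Ws (S (N - k))) with (Ws (N - k) + h ^ (N - k) * a (N - k)%nat).
      replace (S N - S k)%nat with (N - k)%nat by lia.
      replace (h ^ (S N)) with (h ^ (S k) * h ^ (N - k)) by (rewrite <- pow_add; f_equal; lia).
      ring. }
    rewrite E1. clear E1.
    assert (EF : Fold = 2 * (- h / 2 * ssum (fun j => h ^ j * b j) (S N) + 1/2 * (Ws (S N) * Ws (S N)) + V0 - ssum (fun j => h ^ j * H j) (S N)) + h ^ (S N) * b N)
      by (rewrite IH; field).
    rewrite EF. clear EF IH.
    change (Ws (S (S N))) with (Ws (S N) + h ^ (S N) * a (S N)).
    change (ssum (fun j => h ^ j * b j) (S (S N))) with (ssum (fun j => h ^ j * b j) (S N) + h ^ (S N) * b (S N)).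
    change (ssum (fun j => h ^ j * H j) (S (S N))) with (ssum (fun j => h ^ j * H j) (S N) + h ^ (S N) * H (S N)).
    rewrite <- HJN. rewrite E3.
    change (h ^ (S (S N))) with (h * h ^ (S N)).
    field.
Qed.

Lemma Ws_diff n A : 0 < h <= 1 -> (forall j, (j < n)%nat -> Rabs (a j) <= A) ->
  forall d m, (m + d <= n)%nat -> Rabs (Ws (m + d) - Ws m) <= INR d * (h ^ m * A).
Proof.
  intros Hh HA d. induction d; intros m Hmd.
  - rewrite Nat.add_0_r. unfold Rminus. rewrite Rplus_opp_r, Rabs_R0. simpl; lra.
  - replace (m + S d)%nat with (S (m + d)) by lia.
    change (Ws (S (m + d))) with (Ws (m + d) + h ^ (m + d) * a (m + d)%nat).
    replace (Ws (m + d) + h ^ (m + d) * a (m + d)%nat - Ws m) with ((Ws (m + d) - Ws m) + h ^ (m + d) * a (m + d)%nat) by ring.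
    eapply Rle_trans. apply Rabs_triang. rewrite S_INR.
    assert (H1 := IHd m ltac:(lia)).
    assert (Hp : 0 < h ^ (m + d)) by (apply pow_lt; lra).
    assert (Hp2 : h ^ (m + d) <= h ^ m).
    { rewrite pow_add. assert (0 < h ^ m) by (apply pow_lt; lra). assert (h ^ d <= 1) by (apply pow_le1; lra). 
      assert (0 <= h ^ d) by (apply pow_le; lra). nra. }
    rewrite Rabs_mult, (Rabs_right (h ^ (m + d))) by lra.
    assert (Ha : Rabs (a (m + d)%nat) <= A) by (apply HA; lia).
    assert (0 <= Rabs (a (m + d)%nat)) by apply Rabs_pos.
    nra.
Qed.

Lemma resid_bound N A B : 0 < h <= 1 -> (forall j, (j <= N)%nat -> Rabs (a j) <= A) -> Rabs (b N) <= B ->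
  Rabs (- (h ^ (S N) * b N) / 2 + 1/2 * ssum (fun k => h ^ (S k) * a (S k) * (Ws (S N) - Ws (N - k))) N)
  <= h ^ (S N) * (B + INR N * INR N * A * A).
Proof.
  intros Hh HA HB.
  assert (HA0 : 0 <= A) by (eapply Rle_trans; [apply Rabs_pos| apply (HA 0%nat); lia]).
  assert (Hp : 0 < h ^ (S N)) by (apply pow_lt; lra).
  assert (HS : Rabs (ssum (fun k => h ^ (S k) * a (S k) * (Ws (S N) - Ws (N - k))) N) <= INR N * (INR N * A * A * h ^ (S N))).
  { apply ssum_bound. intros k Hk.
    assert (D := Ws_diff (S N) A Hh ltac:(intros j Hj; apply HA; lia) (S k) (N - k) ltac:(lia)).
    replace (N - k + S k)%nat with (S N) in D by lia.
    rewrite !Rabs_mult. rewrite (Rabs_right (h ^ (S k))) by (apply Rle_ge, pow_le; lra).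
    assert (Hak : Rabs (a (S k)) <= A) by (apply HA; lia).
    assert (Hpk : 0 < h ^ (S k)) by (apply pow_lt; lra).
    assert (Hprod : h ^ (S k) * h ^ (N - k) = h ^ (S N)) by (rewrite <- pow_add; f_equal; lia).
    assert (Hk2 : INR (S k) <= INR N) by (apply le_INR; lia).
    assert (0 <= Rabs (a (S k))) by apply Rabs_pos.
    assert (0 <= Rabs (Ws (S N) - Ws (N - k))) by apply Rabs_pos.
    assert (Hpn : 0 < h ^ (N - k)) by (apply pow_lt; lra).
    assert (h ^ (S k) * Rabs (a (S k)) * Rabs (Ws (S N) - Ws (N - k)) <= h ^ (S k) * A * (INR (S k) * (h ^ (N - k) * A))).
    { apply Rmult_le_compat. nra. auto. apply Rmult_le_compat_l; lra. auto. }
    assert (h ^ (S k) * A * (INR (S k) * (h ^ (N - k) * A)) = INR (S k) * A * A * h ^ (S N)) by (rewrite <- Hprod; ring).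
    assert (INR (S k) * A * A * h ^ (S N) <= INR N * A * A * h ^ (S N)).
    { apply Rmult_le_compat_r. lra. apply Rmult_le_compat_r. auto. apply Rmult_le_compat_r; auto. }
    lra. }
  eapply Rle_trans. apply Rabs_triang.
  unfold Rdiv. rewrite Rabs_mult, Rabs_Ropp, Rabs_mult, (Rabs_right (h ^ (S N))) by lra.
  rewrite Rabs_mult, (Rabs_right (/2)) by lra. rewrite (Rabs_right (1 * /2)) by lra.
  assert (0 <= Rabs (b N)) by apply Rabs_pos.
  assert (0 <= INR N) by apply pos_INR.
  assert (X1 : h ^ (S N) * Rabs (b N) <= h ^ (S N) * B) by (apply Rmult_le_compat_l; lra).
  assert (X2 : 0 <= h ^ (S N) * B) by (apply Rmult_le_pos; lra).
  assert (X3 : 0 <= INR N * INR N * A * A * h ^ (S N)).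
  { apply Rmult_le_pos; [|lra]. apply Rmult_le_pos; [|lra]. apply Rmult_le_pos; [|lra]. apply Rmult_le_pos; lra. }
  replace (INR N * (INR N * A * A * h ^ (S N))) with (INR N * INR N * A * A * h ^ (S N)) in HS by ring.
  replace (h ^ (S N) * (B + INR N * INR N * A * A)) with (h ^ (S N) * B + INR N * INR N * A * A * h ^ (S N)) by ring.
  lra.
Qed.
End Resid.

Lemma RInt_minus_R (f g : R -> R) : (forall x, continuous f x) -> (forall x, continuous g x) ->
  RInt (fun x => f x - g x) (-1/2) (1/2) = RInt f (-1/2) (1/2) - RInt g (-1/2) (1/2).
Proof. intros. exact (RInt_minus f g _ _ (ex_RInt_c f _ _ H) (ex_RInt_c g _ _ H0)). Qed.

Lemma core (V : R -> R) (P Hh Hhat h M : R) (w W wd Wd rho : R -> R) :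
  0 < h -> 0 < P ->
  (forall x, is_derive w x (wd x)) -> (forall x, is_derive W x (Wd x)) ->
  periodic1 w -> periodic1 W ->
  (forall x, -h/2 * wd x + 1/2 * (w x) ^ 2 + V x = Hh) ->
  (forall x, -h/2 * Wd x + 1/2 * (W x * W x) + V x - Hhat = rho x) ->
  (forall x, Rabs (rho x) <= M) ->
  (forall x, 0 < W x) -> (forall x, V x < Hhat) ->
  RInt w (-1/2) (1/2) = P -> RInt W (-1/2) (1/2) = P ->
  Rabs (Hh - Hhat) <= M.
Proof.
  intros Hh0 HP0 Hdw HdW Hpw HpW Ew EW Hrho HW0 HV HIw HIW.
  assert (Hcw : forall x, continuous w x) by (intros x; apply (@ex_derive_continuous R_AbsRing R_NormedModule); eexists; eauto).
  assert (HcW : forall x, continuous W x) by (intros x; apply (@ex_derive_continuous R_AbsRing R_NormedModule); eexists; eauto).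
  set (d := fun x => w x - W x).
  assert (Hdd : forall x, is_derive d x (wd x - Wd x)) by (intros; apply dminus; auto).
  assert (Hcd : forall x, continuous d x) by (intros; apply cminus; auto).
  assert (Hpd : periodic1 d) by (intros x; unfold d; rewrite Hpw, HpW; auto).
  assert (HId : RInt d (-1/2) (1/2) = 0) by (unfold d; rewrite RInt_minus_R; auto; lra).
  destruct (per_min d Hpd Hcd) as [xm Hxm].
  destruct (per_max d Hpd Hcd) as [xM HxM].
  assert (Hdm : d xm <= 0).
  { apply Rnot_lt_le; intros Hlt. assert (0 < RInt d (-1/2) (1/2)).
    apply RInt_spos_R; auto. intros x; specialize (Hxm x); lra. lra. }
  assert (HdM : 0 <= d xM).
  { apply Rnot_lt_le; intros Hlt. assert (0 < RInt (fun x => - d x) (-1/2) (1/2)).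
    apply RInt_spos_R. intros; apply (continuous_ext (fun x => 0 - d x)); [intros; unfold Rminus; apply Rplus_0_l| apply cminus; auto; apply cconst].
    intros x; specialize (HxM x); lra.
    assert (RInt (fun x => - d x) (-1/2) (1/2) = 0 - RInt d (-1/2) (1/2)).
    { rewrite (RInt_ext (fun x => - d x) (fun x => 0 - d x)) by (intros; unfold Rminus; symmetry; apply Rplus_0_l).
      rewrite RInt_minus_R, RInt_const_R; auto. intros; apply cconst. }
    lra. }
  assert (Zm : wd xm - Wd xm = 0) by (apply (deriv_min0 d xm); auto).
  assert (ZM : wd xM - Wd xM = 0) by (apply (deriv_max0 d xM); auto).
  assert (Em := Ew xm). assert (EWm := EW xm). assert (EM := Ew xM). assert (EWM := EW xM).
  assert (Rm := Hrho xm). assert (RM := Hrho xM).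
  rewrite Rabs_le_between in Rm, RM.
  unfold d in Hdm, HdM.
  apply Rabs_le_between. split; apply Rnot_lt_le; intros Hlt.
  -
    assert (HWM := HW0 xM).
    assert (0 <= (w xM - W xM) * (w xM + W xM)) by (apply Rmult_le_pos; lra).
    replace (wd xM) with (Wd xM) in EM by lra. nra.
  -
    assert (Hwpos : forall x, 0 < w x).
    { destruct (per_min w Hpw Hcw) as [y Hy].
      assert (HVH : forall x, V x < Hh) by (intros x; specialize (HV x); lra).
      destruct (Rtotal_order (w y) 0) as [Hneg|[Hz|Hpos]].
      - exfalso.
        assert (Hex : exists z, 0 < w z).
        { apply NNPP; intros Hn. assert (RInt w (-1/2) (1/2) <= 0).
          rewrite <- (RInt_const_R 0). apply RInt_le. lra. apply ex_RInt_c; auto. apply ex_RInt_c; intros; apply cconst.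
          intros x _. apply Rnot_lt_le. intros Hx. apply Hn; eauto. lra. }
        destruct Hex as [z Hz].
        destruct (per_reduce w Hpw y) as [y' [Hy' Ey']].
        destruct (per_reduce w Hpw z) as [z' [Hz' Ez']].
        assert (Ez2 : w (z' + 1 + 1) = w z') by (rewrite !Hpw; auto).
        destruct (cross w y' (z' + 1 + 1) Hcw) as [s [Hs Hds]]; try lra.
        specialize (Hds _ (Hdw s)). specialize (Ew s). rewrite Hs in Ew. specialize (HVH s).
        assert (0 <= h * wd s) by (apply Rmult_le_pos; lra).
        lra.
      - exfalso. assert (Z := deriv_min0 w y _ (Hdw y) Hy). specialize (Ew y). rewrite Hz, Z in Ew.
        specialize (HVH y). lra.
      - intros x. specialize (Hy x). lra. }
    assert (Hwm := Hwpos xm). assert (HWm := HW0 xm).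
    assert ((w xm - W xm) * (w xm + W xm) <= 0).
    { apply Rmult_le_0_r; lra. }
    replace (wd xm) with (Wd xm) in Em by lra. nra.
Qed.

Lemma is_derive_eq (f : R -> R) x l l' : is_derive f x l -> l = l' -> is_derive f x l'.
Proof. intros H ->; auto. Qed.

Lemma dcont (f : R -> R) x l : is_derive f x l -> continuous f x.
Proof. intros H. apply (@ex_derive_continuous R_AbsRing R_NormedModule). eexists; eauto. Qed.

Lemma ssum_der (f g : nat -> R -> R) h n x : (forall j y, is_derive (f j) y (g j y)) ->
  is_derive (fun y => ssum (fun j => h ^ j * f j y) n) x (ssum (fun j => h ^ j * g j x) n).
Proof.
  intros Hd. induction n; simpl.
  - apply dconst.
  - apply dplus. auto. apply is_derive_scal. auto.
Qed.

Lemma ssum_per (f : nat -> R -> R) h n : (forall j, periodic1 (f j)) ->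
  periodic1 (fun y => ssum (fun j => h ^ j * f j y) n).
Proof. intros Hp x. apply ssum_ext. intros; rewrite Hp; auto. Qed.

Lemma ssum_cont (f : nat -> R -> R) h n x : (forall j y, continuous (f j) y) ->
  continuous (fun y => ssum (fun j => h ^ j * f j y) n) x.
Proof.
  intros Hc. induction n; simpl. apply cconst. apply cplus. auto. apply cmult. apply cconst. auto.
Qed.

Lemma RInt_scal_R (f : R -> R) k : (forall x, continuous f x) ->
  RInt (fun x => k * f x) (-1/2) (1/2) = k * RInt f (-1/2) (1/2).
Proof. intros H. exact (RInt_scal f _ _ k (ex_RInt_c f _ _ H)). Qed.

Lemma ssum_RInt (f : nat -> R -> R) h n : (forall j y, continuous (f j) y) ->
  RInt (fun y => ssum (fun j => h ^ j * f j y) n) (-1/2) (1/2) = ssum (fun j => h ^ j * RInt (f j) (-1/2) (1/2)) n.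
Proof.
  intros Hc. induction n; simpl.
  - rewrite (RInt_const_R 0). auto.
  - rewrite RInt_plus_R. rewrite IHn. rewrite RInt_scal_R; auto.
    intros; apply ssum_cont; auto. intros; apply cmult; [apply cconst| auto].
Qed.

Lemma fin_bound (g : nat -> R -> R) : (forall j, exists Aj, forall x, Rabs (g j x) <= Aj) ->
  forall n, exists A, 0 <= A /\ forall j, (j <= n)%nat -> forall x, Rabs (g j x) <= A.
Proof.
  intros Hg n. induction n.
  - destruct (Hg 0%nat) as [A0 HA0]. exists (Rmax A0 0). split. apply Rmax_r.
    intros j Hj x. replace j with 0%nat by lia. eapply Rle_trans; [apply HA0| apply Rmax_l].
  - destruct IHn as [A [HA0 HA]]. destruct (Hg (S n)) as [A1 HA1].
    exists (Rmax A A1). split. eapply Rle_trans; [apply HA0| apply Rmax_l].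
    intros j Hj x. destruct (Nat.eq_dec j (S n)) as [->|Hne].
    eapply Rle_trans; [apply HA1| apply Rmax_r].
    eapply Rle_trans; [apply HA; lia| apply Rmax_l].
Qed.

Definition aa (p : R -> R) (v : nat -> R -> R) (j : nat) (x : R) : R :=
  match j with O => p x | S _ => Derive (v j) x end.
Definition bb (dp : R -> R) (v : nat -> R -> R) (j : nat) (x : R) : R :=
  match j with O => dp x | S _ => Derive_n (v j) 2 x end.

Lemma ssum_zero f n : (forall k, (k < n)%nat -> f k = 0) -> ssum f n = 0.
Proof. induction n; intros H; simpl. auto. rewrite IHn. rewrite H. ring. lia. intros; apply H; lia. Qed.
Ltac rring := match goal with |- ?A = ?B => change (@eq R A B) end; ring.

Theorem mainTheorem3
  (V : R -> R) (Hbar : R -> R) (Hh : R -> R) (P : R)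
  (Hj : nat -> R) (v : nat -> R -> R) :
  admissible_potential V ->
  (forall P' : R, is_eff_ham V P' (Hbar P')) ->
  Rbar_lt (P_crit Hbar) (Finite P) ->
  (forall h : R, h > 0 -> is_visc_eff_ham V P h (Hh h)) ->
  expansion_data V P (Hbar P) Hj v ->
  forall N : nat, exists C delta : R, delta > 0 /\
    forall h : R, 0 < h < delta ->
      Rabs (Hh h - Hhat Hj h N) <= C * h ^ (N + 1).
Proof.
  intros Hadm Heff Hcrit Hvisc Hexp N.
  destruct (Hbar_facts V Hbar P Hadm Heff Hcrit) as [HP0 [HVc HIp]].
  destruct Hadm as [Hsm [HVper _]].
  assert (HV := smooth_cont V Hsm).
  destruct Hexp as [H0 [Hv0 Hexp]].
  set (c := Hbar P) in *.
  set (p := pplus V c).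
  assert (HIp' : RInt p (-1/2) (1/2) = P) by exact HIp.
  assert (Hp0 : forall x, 0 < p x) by (intros x; apply sqrt_lt_R0; specialize (HVc x); lra).
  assert (Hpsq : forall x, p x * p x = 2 * (c - V x)) by (intros x; apply sqrt_sqrt; specialize (HVc x); lra).
  set (dp := fun x => - Derive V x / p x).
  assert (Hdp : forall x, is_derive p x (dp x)).
  { intros x. unfold p, pplus, dp. auto_derive.
    split. exact (Hsm 1%nat x). split; auto. specialize (HVc x); lra.
    replace (c + - V x) with (c - V x) by ring. assert (Hq := Hp0 x). unfold p, pplus in Hq. change (Derive (fun x0 => V x0) x) with (Derive V x). unfold p, pplus. field. lra. }
  assert (Hcdp : forall x, continuous dp x).
  { intros x. apply (@ex_derive_continuous R_AbsRing R_NormedModule). unfold dp, p, pplus. auto_derive.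
    split. exact (Hsm 2%nat x). split. exact (Hsm 1%nat x). split. specialize (HVc x); lra.
    split; auto. assert (Hq := Hp0 x). unfold p, pplus in Hq. replace (c + - V x) with (c - V x) by ring. lra. }
  assert (Hcp : forall x, continuous p x) by (intros; eapply dcont; eauto).
  assert (Hpp : periodic1 p) by (intros x; unfold p, pplus; rewrite HVper; auto).
  assert (Hpdp : periodic1 dp) by (intros x; unfold dp; rewrite Hpp, (per_Derive V HVper); auto).
  assert (Hv0d : forall y, is_derive (v 0%nat) y (p y - P)).
  { intros y. apply (is_derive_ext (fun x => RInt p (-1/2) x - P * (x + 1/2))).
    intros t; rewrite Hv0; auto.
    eapply is_derive_eq. apply dminus. apply Q_deriv; auto. apply is_derive_scal. apply dplus. apply did. apply dconst.
    match goal with |- ?A = ?B => change (@eq R A B) end; ring. }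
  assert (Hv0'' : forall x, Derive_n (v 0%nat) 2 x = dp x).
  { intros x. change (Derive (fun y => Derive (v 0%nat) y) x = dp x).
    rewrite (Derive_ext _ (fun y => p y - P)) by (intros; apply is_derive_unique; auto).
    apply is_derive_unique. eapply is_derive_eq. apply dminus. apply Hdp. apply dconst. rring. }
  assert (Hvs : forall k, smooth (v (S k)) /\ periodic1 (v (S k))).
  { intros k. destruct (Hexp (S k) ltac:(lia)) as [_ [A [B _]]]. auto. }
  set (a := aa p v). set (b := bb dp v).
  assert (Ha_der : forall j x, is_derive (a j) x (b j x)).
  { intros [|k] x. apply Hdp. destruct (Hvs k) as [Hs _].
    exact (Derive_correct _ x (Hs 2%nat x)). }
  assert (Ha_cont : forall j x, continuous (a j) x) by (intros; eapply dcont; eauto).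
  assert (Hb_cont : forall j x, continuous (b j) x).
  { intros [|k] x. apply Hcdp. destruct (Hvs k) as [Hs _].
    exact (@ex_derive_continuous R_AbsRing R_NormedModule _ x (Hs 3%nat x)). }
  assert (Ha_per : forall j, periodic1 (a j)).
  { intros [|k]. exact Hpp. destruct (Hvs k) as [_ Hp]. exact (per_Derive _ Hp). }
  assert (Hb_per : forall j, periodic1 (b j)).
  { intros [|k]. exact Hpdp. destruct (Hvs k) as [_ Hp]. exact (per_Derive _ (per_Derive _ Hp)). }
  assert (Eq0 : forall x, 1/2 * (a 0%nat x * a 0%nat x) + V x = Hj 0%nat).
  { intros x. change (a 0%nat x) with (p x). rewrite Hpsq, H0. lra. }
  assert (EqJ : forall x j, (1 <= j)%nat ->
     -1/2 * b (j-1)%nat x + a 0%nat x * a j x + 1/2 * ssum (fun k => a (S k) x * a (j - S k)%nat x) (j - 1) = Hj j).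
  { intros x j Hj1. destruct j as [|j']. lia.
    destruct (Hexp (S j') Hj1) as [_ [_ [_ Heq]]]. rewrite <- (Heq x). clear Heq.
    replace (S j' - 1)%nat with j' by lia.
    assert (Eb : Derive_n (v j') 2 x = b j' x).
    { destruct j'. rewrite Hv0''. reflexivity. reflexivity. }
    rewrite Eb. change (a 0%nat x) with (p x). change (a (S j') x) with (Derive (v (S j')) x).
    f_equal. f_equal. unfold cross_sum. rewrite fold_ssum. replace (S j' - 1)%nat with j' by lia.
    apply ssum_ext. intros k Hk. replace (S j' - (1 + k))%nat with (S (j' - S k)) by lia.
    replace (S j' - S k)%nat with (S (j' - S k)) by lia. reflexivity. }
  assert (HAj : forall j, exists Aj, forall x, Rabs (a j x) <= Aj).
  { intros j. destruct (per_bound (a j) (Ha_per j) (Ha_cont j)) as [B [_ HB]]. eauto. }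
  destruct (fin_bound a HAj N) as [A [HA0 HA]].
  destruct (per_bound (b N) (Hb_per N) (Hb_cont N)) as [B [HB0 HB]].
  assert (HKj : forall j, exists Aj, forall x : R, Rabs ((fun (j : nat) (_ : R) => Hj j) j x) <= Aj).
  { intros j. exists (Rabs (Hj j)). intros; apply Rle_refl. }
  destruct (fin_bound (fun j _ => Hj j) HKj N) as [K [HK0 HK]].
  destruct (per_min p Hpp Hcp) as [xm Hxm]. set (pm := p xm).
  assert (Hpm : 0 < pm) by apply Hp0.
  destruct (per_max V HVper HV) as [xV HxV]. set (gam := c - V xV).
  assert (Hgam : 0 < gam) by (unfold gam; specialize (HVc xV); lra).
  set (M := B + INR N * INR N * A * A).
  assert (HN0 : 0 <= INR N) by apply pos_INR.
  assert (HNA : 0 < INR N * A + 1) by nra.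
  assert (HNK : 0 < INR N * K + 1) by nra.
  exists M, (Rmin 1 (Rmin (pm / (INR N * A + 1)) (gam / (INR N * K + 1)))).
  split.
  { apply Rmin_glb_lt. lra. apply Rmin_glb_lt; apply Rdiv_lt_0_compat; lra. }
  intros h [Hh0 Hhd].
  assert (Hh1 : h <= 1) by (eapply Rlt_le, Rlt_le_trans; [apply Hhd| apply Rmin_l]).
  assert (Hh2 : h * (INR N * A + 1) < pm).
  { assert (h < pm / (INR N * A + 1)) by (eapply Rlt_le_trans; [apply Hhd| eapply Rle_trans; [apply Rmin_r| apply Rmin_l]]).
    apply (Rmult_lt_compat_r (INR N * A + 1)) in H; auto. unfold Rdiv in H. rewrite Rmult_assoc, Rinv_l in H; lra. }
  assert (Hh3 : h * (INR N * K + 1) < gam).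
  { assert (h < gam / (INR N * K + 1)) by (eapply Rlt_le_trans; [apply Hhd| eapply Rle_trans; [apply Rmin_r| apply Rmin_r]]).
    apply (Rmult_lt_compat_r (INR N * K + 1)) in H; auto. unfold Rdiv in H. rewrite Rmult_assoc, Rinv_l in H; lra. }
  destruct (Hvisc h ltac:(lra)) as [vh [Hvhp [Hvh2 Hvheq]]].
  set (W := fun x => Ws (fun j => a j x) h (S N)).
  set (Wd := fun x => ssum (fun j => h ^ j * b j x) (S N)).
  set (Hh_ := Hhat Hj h N).
  assert (EHhat : Hh_ = ssum (fun j => h ^ j * Hj j) (S N)) by (apply sum_f_R0_ssum).
  set (rho := fun x => -h/2 * Wd x + 1/2 * (W x * W x) + V x - Hh_).
  assert (Hrho : forall x, Rabs (rho x) <= M * h ^ (S N)).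
  { intros x. unfold rho, W, Wd. rewrite EHhat.
    assert (E := resid_id (fun j => a j x) (fun j => b j x) Hj (V x) h N (Eq0 x) (fun j Hj => EqJ x j ltac:(lia))).
    cbv beta in E. rewrite E.
    replace (M * h ^ (S N)) with (h ^ (S N) * (B + INR N * INR N * A * A)) by (unfold M; ring).
    apply (resid_bound (fun j => a j x) (fun j => b j x) h N A B). lra. intros j Hj'; apply HA; auto. apply HB. }
  assert (HdW : forall x, is_derive W x (Wd x)) by (intros x; apply ssum_der; auto).
  assert (HpW : periodic1 W) by (apply ssum_per; auto).
  assert (HIW : RInt W (-1/2) (1/2) = P).
  { unfold W, Ws. rewrite ssum_RInt by auto. rewrite ssum_shift.
    rewrite ssum_zero. change (a 0%nat) with p. rewrite HIp'. simpl; ring.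
    intros k _. destruct (Hvs k) as [Hs Hpv].
    change (RInt (a (S k)) (-1/2) (1/2)) with (RInt (Derive (v (S k))) (-1/2) (1/2)).
    rewrite RInt_per_deriv; auto. ring. intros x; exact (Hs 1%nat x).
    intros x. exact (Ha_cont (S k) x). }
  assert (HW0 : forall x, 0 < W x).
  { intros x. assert (D := Ws_diff (fun j => a j x) h (S N) A ltac:(lra) ltac:(intros j Hj'; apply HA; lia) N 1%nat ltac:(lia)).
    replace (1 + N)%nat with (S N) in D by lia. rewrite Ws1 in D. fold (W x) in D.
    rewrite Rabs_le_between in D. change (a 0%nat x) with (p x) in D. simpl pow in D.
    specialize (Hxm x). fold pm in Hxm. nra. }
  assert (HVH : forall x, V x < Hh_).
  { intros x. rewrite EHhat, ssum_shift.
    assert (Hs : Rabs (ssum (fun k => h ^ (S k) * Hj (S k)) N) <= INR N * (h * K)).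
    { apply ssum_bound. intros k Hk. rewrite Rabs_mult, Rabs_right by (apply Rle_ge, pow_le; lra).
      assert (Hk1 : Rabs (Hj (S k)) <= K) by (apply (HK (S k)); [lia| exact 0]).
      assert (h ^ (S k) <= h). { simpl. assert (h ^ k <= 1) by (apply pow_le1; lra). nra. }
      assert (0 <= h ^ (S k)) by (apply pow_le; lra). assert (0 <= Rabs (Hj (S k))) by apply Rabs_pos. nra. }
    rewrite Rabs_le_between in Hs. rewrite pow_O, H0. fold c.
    specialize (HxV x). unfold gam in Hh3. replace (h * (INR N * K + 1)) with (INR N * (h * K) + h) in Hh3 by ring. lra. }
  set (w := fun x => P + Derive vh x).
  assert (Hdw : forall x, is_derive w x (Derive_n vh 2 x)).
  { intros x. eapply is_derive_eq. apply dplus. apply dconst. apply (Derive_correct (Derive vh) x (proj2 (Hvh2 x))).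
    change (Derive_n vh 2 x) with (Derive (Derive vh) x). rring. }
  assert (Hpw : periodic1 w) by (intros x; unfold w; rewrite (per_Derive vh Hvhp); auto).
  assert (Hcdvh : forall x, continuous (Derive vh) x) by (intros x; eapply dcont; apply (Derive_correct _ x (proj2 (Hvh2 x)))).
  assert (HIw : RInt w (-1/2) (1/2) = P).
  { unfold w. rewrite RInt_plus_R. rewrite RInt_const_R, RInt_per_deriv; auto. rring.
    intros x; exact (proj1 (Hvh2 x)). intros; apply cconst. auto. }
  assert (Hfin := core V P (Hh h) Hh_ h (M * h ^ (S N)) w W (fun x => Derive_n vh 2 x) Wd rho Hh0 HP0 Hdw HdW Hpw HpW
     Hvheq (fun x => eq_refl) Hrho HW0 HVH HIw HIW).
  rewrite Nat.add_1_r. exact Hfin.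
Qed.
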